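(* Let $(A_i)_{i\in I}$ be any family of finite partially ordered sets, each with a least element $0_i$ and a greatest element $1_i$, and let $A=\prod_{i\in I}A_i$ with the componentwise partial order $\preccurlyeq$. Let $S$ be the set of elements of $A$ whose $i$-th coordinate is $0_i$ for all but at most one $i$, and $S'$ the set of elements whose $i$-th coordinate is $1_i$ for all but at most one $i$. Let $U(A)\subseteq 2^A$ be the set of up-sets of $(A,\preccurlyeq)$. Then for $x\in U(A)$ the following are equivalent: (i) $x$ is an isolated point of $U(A)$ in the topology induced by the natural topology on $2^A$; (ii) for some natural number $n$ and distinct $i_0,\dots,i_{n-1}\in I$, $x$ is the inverse image under the projection of $A$ onto $A_{i_0}\times\dots\times A_{i_{n-1}}$ of an up-set of that product; (iii) $x$ lies in the lattice of up-sets of $A$ generated (under pairwise unions and intersections) by $\emptyset$ and the sets ${\uparrow}(s)$ for $s\in S$; (iv) $A-x$ lies in the lattice of down-sets of $A$ generated (under pairwise unions and intersections) by $\emptyset$ and the sets ${\downarrow}(s)$ for $s\in S'$.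
   Context: An up-set (down-set) of a poset is a subset closed upward (downward). ${\uparrow}(a)=\{b\mid b\succcurlyeq a\}$ and ${\downarrow}(a)=\{b\mid b\preccurlyeq a\}$. The natural topology on $2^A$ (the set of subsets of $A$) is the product topology of copies of the discrete space $\{0,1\}$, with subbasis the sets $\{x\mid a\in x\}$ and $\{x\mid a\notin x\}$ for $a\in A$. *)

(* Defs.v *)
From HB Require Import structures.
From mathcomp Require Import all_boot all_order.
From mathcomp Require Import boolp classical_sets.
From Stdlib Require List.
Unset Printing Implicit Defensive.
Import Order.TTheory.
Local Open Scope classical_set_scope.
Local Open Scope order_scope.

Section Defs.
Context {I : Type} {d : I -> Order.disp_t} (A : forall i, finTBPOrderType (d i)).

Definition prodA := forall i, A i.
Definition ple (a b : prodA) : Prop := forall i, a i <= b i.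

Definition upset (x : set prodA) : Prop := forall a b, x a -> ple a b -> x b.
Definition downset (x : set prodA) : Prop := forall a b, x b -> ple a b -> x a.
Definition upcl (a : prodA) : set prodA := [set b | ple a b].
Definition downcl (a : prodA) : set prodA := [set b | ple b a].

Definition Sset : set prodA :=
  [set a | forall i j, a i != \bot -> a j != \bot -> i = j].
Definition Sset' : set prodA :=
  [set a | forall i j, a i != \top -> a j != \top -> i = j].

(* natural (product of discrete {0,1}) topology on 2^A:
   basic open sets are finite intersections of subbasic sets
   {x | a \in x} (a in P) and {x | a \notin x} (a in N). *)
Definition basic_open (P N : seq prodA) : set (set prodA) :=
  [set y | (forall a, Stdlib.Lists.List.In a P -> y a) /\ (forall a, Stdlib.Lists.List.In a N -> ~ y a)].
Definition nat_open (O : set (set prodA)) : Prop :=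
  forall y, O y -> exists P N, basic_open P N y /\ basic_open P N `<=` O.

Definition UA : set (set prodA) := [set x | upset x].

Definition isolated_in (U : set (set prodA)) (x : set prodA) : Prop :=
  U x /\ exists O, nat_open O /\ O `&` U = [set x].

Definition finitely_determined (x : set prodA) : Prop :=
  exists (n : nat) (idx : 'I_n -> I), injective idx /\
  exists y : set (forall k : 'I_n, A (idx k)),
    (forall a b : (forall k : 'I_n, A (idx k)),
        y a -> (forall k, a k <= b k) -> y b) /\
    x = [set a : prodA | y (fun k => a (idx k))].
End Defs.

Inductive gen_lattice {T : Type} (G : set (set T)) : set T -> Prop :=
  | gl_empty : gen_lattice G set0
  | gl_base : forall s, G s -> gen_lattice G s
  | gl_union : forall s t, gen_lattice G s -> gen_lattice G t -> gen_lattice G (s `|` t)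
  | gl_inter : forall s t, gen_lattice G s -> gen_lattice G t -> gen_lattice G (s `&` t).

(* Main.v *)
Require Import Defs.
From HB Require Import structures.
From mathcomp Require Import all_boot all_order.
From mathcomp Require Import boolp classical_sets.
From Stdlib Require List.
Local Open Scope classical_set_scope.
Import Order.TTheory.

Lemma gl_bigcup {T : Type} (G : set (set T)) (L : list (set T)) :
  (forall s, List.In s L -> gen_lattice G s) ->
  gen_lattice G (fun c => exists s, List.In s L /\ s c).
Proof.
elim: L => [|s L IH] h.
  have -> : (fun c : T => exists s, List.In s [::] /\ s c) = set0.
    by apply/funext => c; apply/propext; split => [[? [[]]]|].
  exact: gl_empty.
have -> : (fun c => exists s0, List.In s0 (s :: L) /\ s0 c) =
   s `|` (fun c => exists s, List.In s L /\ s c).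
  apply/funext => c; apply/propext; split.
    by case=> s0 [[<-|H] sc]; [left|right; exists s0].
  by case=> [sc|[s0 [H sc]]]; [exists s; split; [left|]|exists s0; split; [right|]].
apply: gl_union; first by apply: h; left.
by apply: IH => s0 H; apply: h; right.
Qed.

Lemma gl_bigcap {T : Type} (G : set (set T)) (top : set T) (L : list (set T)) :
  gen_lattice G top ->
  (forall s, List.In s L -> gen_lattice G s) ->
  gen_lattice G (fun c => top c /\ forall s, List.In s L -> s c).
Proof.
move=> ht; elim: L => [|s L IH] h.
  have -> : (fun c => top c /\ forall s, List.In s [::] -> s c) = top.
    by apply/funext => c; apply/propext; split => [[]//|tc]; split.
  exact: ht.
have -> : (fun c => top c /\ forall s0, List.In s0 (s :: L) -> s0 c) =
   s `&` (fun c => top c /\ forall s, List.In s L -> s c).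
  apply/funext => c; apply/propext; split.
    by case=> tc H; split; [apply: H; left|split => // s0 H0; apply: H; right].
  by case=> sc [tc H]; split => // s0 [<-|H0] //; apply: H.
apply: gl_inter; first by apply: h; left.
by apply: IH => s0 H; apply: h; right.
Qed.

Lemma list_witness {X Y : Type} (Q : X -> Y -> Prop) (L : list X) :
  (forall z, List.In z L -> exists i, Q z i) ->
  exists J : list Y, forall z, List.In z L -> exists i, List.In i J /\ Q z i.
Proof.
elim: L => [|z L IH] h; first by exists [::].
have [i Qi] := h z (or_introl erefl).
have [J HJ] := IH (fun z0 H => h z0 (or_intror H)).
exists (i :: J) => z0 [<-|H]; first by exists i; split; [left|].
by have [i0 [H1 H2]] := HJ z0 H; exists i0; split; [right|].
Qed.

Lemma size_len {T : Type} (s : seq T) : size s = length s.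
Proof. by elim: s => //= a s ->. Qed.

Lemma nth_eq {T : Type} (s : seq T) dflt k : nth dflt s k = List.nth k s dflt.
Proof. by elim: s k => [|a s IH] [|k] //=. Qed.

Lemma memIn {T : eqType} (x : T) (s : seq T) : x \in s -> List.In x s.
Proof.
elim: s => [|a s IH] //; rewrite in_cons => /orP [/eqP ->|H]; [by left|right; exact: IH].
Qed.

Section Helpers.
Local Open Scope order_scope.
Context {I : Type} {d : I -> Order.disp_t} (A : forall i, finTBPOrderType (d i)).
Notation PA := (prodA A).
Notation In := List.In.

Definition Det (x : set PA) : Prop :=
  exists J : list I, forall b b' : PA, (forall i, In i J -> b i = b' i) -> x b -> x b'.

Lemma setext (X Y : set PA) : (forall c, X c <-> Y c) -> X = Y.
Proof. by move=> h; apply/funext => c; apply/propext. Qed.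

Lemma Det_compl x : Det x -> Det (~` x).
Proof.
case=> J h; exists J => b b' ag nb xb'; apply: nb; apply: (h b') => // i Hi.
by rewrite ag.
Qed.

Lemma fin_reps (J : list I) : forall x : set PA, exists L : list PA,
  (forall b, In b L -> x b) /\
  (forall b, x b -> exists b', In b' L /\ forall i, In i J -> b' i = b i).
Proof.
elim: J => [|i J IH] x.
  case: (pselect (exists b, x b)) => [[b xb]|nb].
    exists [:: b]; split; first by move=> b0 [<-|[]].
    by move=> b1 _; exists b; split; [left|].
  exists [::]; split => // b xb; exfalso; apply: nb; by exists b.
have H : forall s : seq (A i), exists L : list PA,
  (forall b, In b L -> x b) /\
  (forall b, x b -> b i \in s -> exists b', In b' L /\ forall j, In j (i :: J) -> b' j = b j).
  elim=> [|a s IHs]; first by exists [::]; split.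
  have [La [La1 La2]] := IH (fun b => x b /\ b i = a).
  have [Ls [Ls1 Ls2]] := IHs.
  exists (La ++ Ls); split.
    move=> b Hb; case: (List.in_app_or _ _ _ Hb) => [/La1 []//|/Ls1//].
  move=> b xb; rewrite in_cons; case: eqP => [bia|_] /= bs.
    have [b' [b'L ag]] := La2 b (conj xb bia).
    exists b'; split; first by apply: List.in_or_app; left.
    move=> j [<-|jJ]; last exact: ag.
    by have [_ ->] := La1 _ b'L.
  have [b' [b'L ag]] := Ls2 b xb bs.
  by exists b'; split; first by apply: List.in_or_app; right.
have [L [L1 L2]] := H (enum (A i)).
exists L; split => // b xb; apply: L2 => //; by rewrite mem_enum.
Qed.

Lemma Det_union x y : Det x -> Det y -> Det (x `|` y).
Proof.
case=> J1 h1 [J2 h2]; exists (J1 ++ J2) => b b' ag [xb|yb].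
  by left; apply: (h1 b) => // i Hi; apply: ag; apply: List.in_or_app; left.
by right; apply: (h2 b) => // i Hi; apply: ag; apply: List.in_or_app; right.
Qed.

Lemma Det_inter x y : Det x -> Det y -> Det (x `&` y).
Proof.
case=> J1 h1 [J2 h2]; exists (J1 ++ J2) => b b' ag [xb yb]; split.
  by apply: (h1 b) => // i Hi; apply: ag; apply: List.in_or_app; left.
by apply: (h2 b) => // i Hi; apply: ag; apply: List.in_or_app; right.
Qed.

Lemma Det_genS x : gen_lattice [set u | exists s, Sset A s /\ u = upcl A s] x -> Det x.
Proof.
elim=> [|s0 [s [Ss ->]]|u v _ hu _ hv|u v _ hu _ hv].
- by exists [::].
- case: (pselect (exists i, s i != \bot)) => [[i si]|ns].
    exists [:: i] => b b' ag sb j; case: (eqVneq (s j) \bot) => [->|sj]; first exact: le0x.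
    have ij := Ss i j si sj; subst j; rewrite -ag; [exact: sb|by left].
  exists [::] => b b' _ _ j; case: (eqVneq (s j) \bot) => [->|sj]; first exact: le0x.
  by exfalso; apply: ns; exists j.
- exact: Det_union.
- exact: Det_inter.
Qed.

Lemma Det_genS' x : gen_lattice [set u | exists s, Sset' A s /\ u = downcl A s] x -> Det x.
Proof.
elim=> [|s0 [s [Ss ->]]|u v _ hu _ hv|u v _ hu _ hv].
- by exists [::].
- case: (pselect (exists i, s i != \top)) => [[i si]|ns].
    exists [:: i] => b b' ag sb j; case: (eqVneq (s j) \top) => [->|sj]; first exact: lex1.
    have ij := Ss i j si sj; subst j; rewrite -ag; [exact: sb|by left].
  exists [::] => b b' _ _ j; case: (eqVneq (s j) \top) => [->|sj]; first exact: lex1.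
  by exfalso; apply: ns; exists j.
- exact: Det_union.
- exact: Det_inter.
Qed.

Definition rb (J : list I) (b : PA) : PA := fun j => if pselect (In j J) then b j else \bot.
Definition rt (J : list I) (b : PA) : PA := fun j => if pselect (In j J) then b j else \top.

Lemma rb_ag J b i : In i J -> rb J b i = b i.
Proof. by rewrite /rb; case: (pselect (In i J)). Qed.
Lemma rt_ag J b i : In i J -> rt J b i = b i.
Proof. by rewrite /rt; case: (pselect (In i J)). Qed.
Lemma rb_le J b c : (forall i, In i J -> b i = c i) -> ple A (rb J b) c.
Proof. move=> h j; rewrite /rb; destruct (pselect (In j J)) as [H|H]; [rewrite /= h //|exact: le0x]. Qed.
Lemma rt_ge J b c : (forall i, In i J -> b i = c i) -> ple A c (rt J b).
Proof. move=> h j; rewrite /rt; destruct (pselect (In j J)) as [H|H]; [rewrite /= h //|exact: lex1]. Qed.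

Lemma Det_iso x : upset A x -> Det x -> isolated_in A (UA A) x.
Proof.
move=> ux [J hJ].
have [L1 [L11 L12]] := fin_reps J x.
have [L2 [L21 L22]] := fin_reps J (~` x).
have xr : forall b, x b -> x (rb J b).
  by move=> b xb; apply: (hJ b) => // i Hi; rewrite rb_ag.
have xr' : forall b, ~ x b -> ~ x (rt J b).
  by move=> b nxb xr'; apply: nxb; apply: (hJ (rt J b)) => // i Hi; rewrite rt_ag.
split => //; exists (basic_open A (List.map (rb J) L1) (List.map (rt J) L2)); split.
  by move=> y Hy; exists (List.map (rb J) L1), (List.map (rt J) L2); split.
apply/funext => y; apply/propext; split.
  case=> [[Py Ny] uy]; apply: setext => c; split => [yc|xc].
    case: (pselect (x c)) => // nxc.
    have [b [bL ag]] := L22 c nxc.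
    exfalso; apply: (Ny (rt J b)); first by apply/List.in_map_iff; exists b.
    by apply: (uy c) => //; apply: rt_ge.
  have [b [bL ag]] := L12 c xc.
  apply: (uy (rb J b)); last exact: rb_le.
  by apply: Py; apply/List.in_map_iff; exists b.
move=> ->; split; last exact: ux.
split.
  by move=> a /List.in_map_iff [b [<- bL]]; apply: xr; apply: L11.
by move=> a /List.in_map_iff [b [<- bL]]; apply: xr'; apply: L21.
Qed.

Definition eb (i : I) (b : PA) : PA := fun j => if pselect (j = i) then b j else \bot.
Definition et (i : I) (b : PA) : PA := fun j => if pselect (j = i) then b j else \top.
Definition botA : PA := fun j => \bot.
Definition topA : PA := fun j => \top.

Lemma eb_self i b : eb i b i = b i.
Proof. by rewrite /eb; destruct (pselect (i = i)). Qed.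
Lemma et_self i b : et i b i = b i.
Proof. by rewrite /et; destruct (pselect (i = i)). Qed.

Lemma Det_genS_of x : upset A x -> Det x ->
  gen_lattice [set u | exists s, Sset A s /\ u = upcl A s] x.
Proof.
move=> ux [J hJ].
have [L [L1 L2]] := fin_reps J x.
pose U := fun b => fun c => upcl A botA c /\
   forall s, In s (List.map (fun i => upcl A (eb i b)) J) -> s c.
have -> : x = fun c => exists s, In s (List.map U L) /\ s c.
  apply: setext => c; split => [xc|[s [Hs sc]]].
    have [b [bL ag]] := L2 c xc.
    exists (U b); split; first by apply/List.in_map_iff; exists b.
    split; first by move=> j; exact: le0x.
    move=> s /List.in_map_iff [i [<- iJ]] j; rewrite /eb.
    destruct (pselect (j = i)) as [e|e]; last exact: le0x.
    by subst j; rewrite /= ag.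
  move: Hs => /List.in_map_iff [b [Ub bL]]; subst s.
  apply: (ux (rb J b)).
    by apply: (hJ b); [move=> i Hi; rewrite rb_ag|apply: L1].
  move=> j; rewrite /rb; destruct (pselect (In j J)) as [H|H]; last exact: le0x.
  have := sc.2 (upcl A (eb j b)); rewrite /= => h.
  by rewrite -[b j](eb_self j); apply: h; apply/List.in_map_iff; exists j.
apply: gl_bigcup => s1 /List.in_map_iff [b [<- _]]; apply: gl_bigcap.
  apply: gl_base; exists botA; split => // i j; by rewrite eqxx.
move=> s2 /List.in_map_iff [i [<- _]]; apply: gl_base; exists (eb i b); split => //.
move=> i1 j1; rewrite /eb.
destruct (pselect (i1 = i)) as [e1|e1]; last by rewrite eqxx.
destruct (pselect (j1 = i)) as [e2|e2]; last by rewrite eqxx.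
by move=> _ _; rewrite e1 e2.
Qed.

Lemma Det_genS'_of x : upset A x -> Det x ->
  gen_lattice [set u | exists s, Sset' A s /\ u = downcl A s] (~` x).
Proof.
move=> ux Dx; have [J hJ] := Det_compl x Dx; case: Dx => J0 hJ0.
have [L [L1 L2]] := fin_reps J (~` x).
pose U := fun b => fun c => downcl A topA c /\
   forall s, In s (List.map (fun i => downcl A (et i b)) J) -> s c.
have -> : (~` x)%classic = fun c => exists s, In s (List.map U L) /\ s c.
  apply: setext => c; split => [xc|[s [Hs sc]]].
    have [b [bL ag]] := L2 c xc.
    exists (U b); split; first by apply/List.in_map_iff; exists b.
    split; first by move=> j; exact: lex1.
    move=> s /List.in_map_iff [i [<- iJ]] j; rewrite /et.
    destruct (pselect (j = i)) as [e|e]; last exact: lex1.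
    by subst j; rewrite /= ag.
  move: Hs => /List.in_map_iff [b [Ub bL]]; subst s.
  have nr : ~ x (rt J b).
    by apply: (hJ b); [move=> i Hi; rewrite rt_ag|apply: L1].
  move=> xc; apply: nr; apply: (ux c) => // j.
  rewrite /rt; destruct (pselect (In j J)) as [H|H]; last exact: lex1.
  have := sc.2 (downcl A (et j b)); rewrite /= => h.
  by rewrite -[b j](et_self j); apply: h; apply/List.in_map_iff; exists j.
apply: gl_bigcup => s1 /List.in_map_iff [b [<- _]]; apply: gl_bigcap.
  apply: gl_base; exists topA; split => // i j; by rewrite eqxx.
move=> s2 /List.in_map_iff [i [<- _]]; apply: gl_base; exists (et i b); split => //.
move=> i1 j1; rewrite /et.
destruct (pselect (i1 = i)) as [e1|e1]; last by rewrite eqxx.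
destruct (pselect (j1 = i)) as [e2|e2]; last by rewrite eqxx.
by move=> _ _; rewrite e1 e2.
Qed.

Lemma iso_Det x : upset A x -> isolated_in A (UA A) x -> Det x.
Proof.
move=> ux [_ [O [oO E]]].
have xO : O x.
  have : (O `&` UA A) x by rewrite E.
  by case.
have [P [N [[Px Nx] sub]]] := oO x xO.
have un : forall y, upset A y -> basic_open A P N y -> y = x.
  move=> y uy boy; have : (O `&` UA A) y by split; [apply: sub|].
  by rewrite E.
have y1 : (fun c => exists p, In p P /\ ple A p c) = x.
  apply: un.
    move=> a b [p [pP pa]] ab; exists p; split => // j.
    exact: le_trans (pa j) (ab j).
  split; first by move=> a aP; exists a; split => // j; exact: lexx.
  by move=> a aN [p [pP pa]]; apply: (Nx a aN); apply: (ux p a (Px p pP) pa).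
have y2 : (fun c => ~ exists n, In n N /\ ple A c n) = x.
  apply: un.
    move=> a b na ab [n [nN bn]]; apply: na; exists n; split => // j.
    exact: le_trans (ab j) (bn j).
  split; first by move=> a aP [n [nN an]]; apply: (Nx n nN (ux a n (Px a aP) an)).
  by move=> a aN H; apply: H; exists a; split => // j; exact: lexx.
have hw : forall z, In z (List.list_prod P N) -> exists i, ~ (z.1 i <= z.2 i).
  case=> p n /List.in_prod_iff [pP nN] /=.
  case: (pselect (exists i, ~ (p i <= n i))) => // h; exfalso.
  apply: (Nx n nN (ux p n (Px p pP) _)) => j.
  case: (pselect (p j <= n j)) => // H; exfalso; apply: h; by exists j.
have [J hJ] := list_witness (fun (z : PA * PA) i => ~ (z.1 i <= z.2 i)) _ hw.
exists J => b b' ag xb; case: (pselect (x b')) => // nb'; exfalso.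
rewrite -y2 /= in nb'.
have [n [nN b'n]] : exists n, In n N /\ ple A b' n.
  by case: (pselect (exists n, In n N /\ ple A b' n)).
rewrite -y1 /= in xb; case: xb => p [pP pb].
have [i [iJ npn]] := hJ (p, n) (proj2 (List.in_prod_iff _ _ _ _) (conj pP nN)).
apply: npn => /=; apply: le_trans (pb i) _; rewrite ag //; exact: b'n.
Qed.

Definition extf {n} {idx : 'I_n -> I} (t : forall k, A (idx k)) (a0 : PA) : PA :=
  fun j => match pselect (exists k, idx k = j) with
  | left h => match cid h with exist k e => eq_rect (idx k) (fun i : I => (A i : Type)) (t k) j e end
  | right _ => a0 j end.

Lemma extf_idx n (idx : 'I_n -> I) (inj : injective idx) t a0 k : extf t a0 (idx k) = t k.
Proof.
rewrite /extf; destruct (pselect (exists k0, idx k0 = idx k)) as [h|h];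
  last by exfalso; apply: h; exists k.
destruct (cid h) as [k' e]; have kk := inj _ _ e; subst k'.
by rewrite (Prop_irrelevance e erefl).
Qed.

Lemma extf_ge n (idx : 'I_n -> I) t a0 :
  (forall k, a0 (idx k) <= t k) -> ple A a0 (extf t a0).
Proof.
move=> h j; rewrite /extf; destruct (pselect (exists k0, idx k0 = j)) as [H|H];
  last exact: lexx.
destruct (cid H) as [k e]; clear H; destruct e; exact: h.
Qed.

Lemma Det_FD x : upset A x -> Det x -> finitely_determined A x.
Proof.
move=> ux [J hJ].
pose dec := fun a b : I => pselect (a = b).
pose J' := List.nodup dec J.
have hJ' : forall b b', (forall i, In i J' -> b i = b' i) -> x b -> x b'.
  by move=> b b' ag; apply: hJ => i Hi; apply: ag; apply/List.nodup_In.
have ND := List.NoDup_nodup dec J.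
pose idx := fun k : 'I_(size J') => tnth (in_tuple J') k.
have ha : forall i, In i J' -> exists k, idx k = i.
  move=> i Hi; have [m [hm e]] := List.In_nth J' i i Hi.
  have hm' : (m < size J')%N.
    by rewrite size_len; apply/ssrnat.ltP.
  by exists (Ordinal hm'); rewrite /idx (tnth_nth i) /= nth_eq.
have inj : injective idx.
  move=> k1 k2; pose d0 := idx k1; rewrite /idx !(tnth_nth d0) /= !nth_eq => e.
  apply: ord_inj; apply: (proj1 (List.NoDup_nth J' d0) ND) => //;
    rewrite -size_len; apply/ssrnat.ltP; exact: ltn_ord.
have ag : forall b b' : PA, (forall k, b (idx k) = b' (idx k)) -> forall i, In i J' -> b i = b' i.
  by move=> b b' h i Hi; have [k <-] := ha i Hi.
exists (size J'), idx; split => //.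
exists (fun t => exists b, x b /\ forall k, b (idx k) = t k); split.
  move=> a t [a0 [xa0 ea]] le; exists (extf t a0); split.
    apply: (ux a0) => //; apply: extf_ge => k; rewrite ea; exact: le.
  by move=> k; rewrite extf_idx.
apply: setext => c; split => [xc|[b [xb e]]]; first by exists c.
by apply: (hJ' b) => //; apply: ag.
Qed.

Lemma FD_Det x : finitely_determined A x -> Det x.
Proof.
case=> n [idx [inj [y [uy ->]]]].
exists (List.map idx (enum 'I_n)) => b b' ag /= yb.
apply: (uy _ _ yb) => k; rewrite ag; first exact: lexx.
by apply/List.in_map_iff; exists k; split => //; apply: memIn; rewrite mem_enum.
Qed.

End Helpers.

Theorem lemma9p1 (I : Type) (d : I -> Order.disp_t)
    (A : forall i, finTBPOrderType (d i)) (x : set (prodA A)) :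
  upset A x ->
  (isolated_in A (UA A) x <-> finitely_determined A x) /\
  (isolated_in A (UA A) x <->
     gen_lattice [set u | exists s, Sset A s /\ u = upcl A s] x) /\
  (isolated_in A (UA A) x <->
     gen_lattice [set u | exists s, Sset' A s /\ u = downcl A s] (~` x)).
Proof.
move=> ux; split; [|split]; split => h.
- exact: (Det_FD _ _ ux (iso_Det _ _ ux h)).
- exact: (Det_iso _ _ ux (FD_Det _ _ h)).
- exact: (Det_genS_of _ _ ux (iso_Det _ _ ux h)).
- exact: (Det_iso _ _ ux (Det_genS _ _ h)).
- exact: (Det_genS'_of _ _ ux (iso_Det _ _ ux h)).
- apply: (Det_iso _ _ ux); rewrite -[x]setCK; apply: Det_compl; exact: (Det_genS' _ _ h).
Qed.
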